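(* For all integers $d\ge2$ and $N\ge1$, the quantity $\|\cdot\|_{\mathcal Q}$ is a norm on $\mathbb R^N$.
   Context: Let $|\Omega\rangle=\sum_{i=1}^d|i\rangle\otimes|i\rangle\in\mathbb C^d\otimes\mathbb C^d$ (unnormalized) and $\omega=|\Omega\rangle\langle\Omega|$. On $(\mathbb C^d)^{\otimes(N+1)}$, with tensor factors labelled $0,1,\dots,N$, $\omega_{(0,i)}\otimes I^{\otimes(N-1)}$ denotes the operator acting as $\omega$ on factors $0$ and $i$ and as the identity on the other factors. For $x\in\mathbb R^N$ let $S_x=\sum_{i=1}^N|x_i|\,\omega_{(0,i)}\otimes I^{\otimes(N-1)}$ and $\|x\|_{\mathcal Q}=\frac{d\,\lambda_{\max}(S_x)-\|x\|_1}{d^2-1}$, where $\lambda_{\max}$ denotes the largest eigenvalue and $\|x\|_1=\sum_i|x_i|$. *)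

(* Defs.v *)
From HB Require Import structures.
From mathcomp Require Import all_boot all_order all_algebra.
From mathcomp Require Import classical_sets reals.
Set Implicit Arguments. Unset Strict Implicit. Unset Printing Implicit Defensive.
Import Order.TTheory GRing.Theory Num.Theory.
Local Open Scope ring_scope.
Local Open Scope classical_set_scope.

(* Computational basis of (C^d)^{(N+1)}: tuples a : {0..N} -> {0..d-1},
   factor 0 is ord0, factor i (1 <= i <= N) is lift ord0 (i-1). *)
Definition tidx (d N : nat) := {ffun 'I_N.+1 -> 'I_d}.

(* Matrix entry <a| omega_(0,k) (x) I^{N-1} |b>, with omega = |Omega><Omega|,
   Omega = sum_i |i>|i> :  delta(a_0,a_k) delta(b_0,b_k) prod_{m<>0,k} delta(a_m,b_m). *)
Definition omega_entry (R : realType) (d N : nat) (k : 'I_N.+1)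
  (a b : tidx d N) : R :=
  ((a ord0 == a k) && (b ord0 == b k)
   && [forall m : 'I_N.+1, ((m != ord0) && (m != k)) ==> (a m == b m)])%:R.

Definition omega0k (R : realType) (d N : nat) (k : 'I_N.+1) :
  'M[R]_#|tidx d N| :=
  \matrix_(i, j) omega_entry R k (enum_val i) (enum_val j).

(* S_x = sum_{i=1}^N |x_i| omega_(0,i) (x) I^{N-1};  x_i is x 0 (i-1). *)
Definition Smat (R : realType) (d N : nat) (x : 'rV[R]_N) : 'M[R]_#|tidx d N| :=
  \sum_(k < N) `|x 0 k| *: omega0k R d (lift ord0 k).

Definition lambda_max (R : realType) (n : nat) (A : 'M[R]_n) : R :=
  sup [set a : R | eigenvalue A a].

Definition norm1 (R : realType) (N : nat) (x : 'rV[R]_N) : R :=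
  \sum_(i < N) `|x 0 i|.

Definition Qnorm (R : realType) (d N : nat) (x : 'rV[R]_N) : R :=
  (d%:R * lambda_max (Smat d x) - norm1 x) / (d%:R ^+ 2 - 1).

Definition is_norm (R : realType) (N : nat) (f : 'rV[R]_N -> R) : Prop :=
  [/\ forall x, 0 <= f x,
      forall x, f x = 0 -> x = 0,
      forall (c : R) x, f (c *: x) = `|c| * f x
    & forall x y, f (x + y) <= f x + f y].

(* Main.v *)
Require Import Defs.
From HB Require Import structures.
From mathcomp Require Import all_boot all_order all_algebra.
From mathcomp Require Import classical_sets reals.
From mathcomp Require Import ring lra.
Set Implicit Arguments. Unset Strict Implicit. Unset Printing Implicit Defensive.
Import Order.TTheory GRing.Theory Num.Theory.
Local Open Scope ring_scope.
Definition rho (d N : nat) (k : 'I_N.+1) (p : tidx d.+2 N) : tidx d.+2 N :=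
  [ffun m => if (m == ord0) || (m == k) then ord0 else p m].
Definition upd (d N : nat) (k : 'I_N.+1) (r : tidx d.+2 N) (i : 'I_d.+2) : tidx d.+2 N :=
  [ffun m => if (m == ord0) || (m == k) then i else r m].

Lemma rhoK d N k (p : tidx d.+2 N) : rho k (rho k p) = rho k p.
Proof. by apply/ffunP=> m; rewrite !ffunE; case: ((m == ord0) || (m == k)). Qed.

Lemma upd0 d N k (r : tidx d.+2 N) i : upd k r i ord0 = i.
Proof. by rewrite ffunE eqxx. Qed.
Lemma updk d N k (r : tidx d.+2 N) i : upd k r i k = i.
Proof. by rewrite ffunE eqxx orbT. Qed.
Lemma rho_upd d N k (r : tidx d.+2 N) i : rho k (upd k r i) = rho k r.
Proof. by apply/ffunP=> m; rewrite !ffunE; case: ((m == ord0) || (m == k)). Qed.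

Lemma upd_rho d N k (q : tidx d.+2 N) : q ord0 = q k -> upd k (rho k q) (q ord0) = q.
Proof.
move=> h; apply/ffunP=> m; rewrite !ffunE.
by case: ifP => [/orP[]/eqP->//|->].
Qed.

Lemma upd_eqE d N k (r : tidx d.+2 N) i q : rho k r = r ->
  (q == upd k r i) = [&& q ord0 == q k, rho k q == r & i == q ord0].
Proof.
move=> hr; apply/eqP/and3P.
  by move=> ->; rewrite upd0 updk rho_upd hr eqxx.
by case=> /eqP h /eqP <- /eqP ->; rewrite upd_rho.
Qed.

Lemma class_sum (R : realType) d N (k : 'I_N.+1) (r : tidx d.+2 N) (F : tidx d.+2 N -> R) :
  rho k r = r ->
  \sum_(q : tidx d.+2 N | (q ord0 == q k) && (rho k q == r)) F q = \sum_(i : 'I_d.+2) F (upd k r i).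
Proof.
move=> hr.
transitivity (\sum_(i : 'I_d.+2) \sum_(q : tidx d.+2 N) (if q == upd k r i then F q else 0)); last first.
  by apply: eq_bigr => i _; rewrite -big_mkcond big_pred1_eq.
rewrite exchange_big /= big_mkcond; apply: eq_bigr => q _.
rewrite -big_mkcond /=.
case: ifP => hq.
  rewrite (big_pred1 (q ord0)) // => i; rewrite upd_eqE //.
  by case/andP: hq => -> ->.
rewrite big_pred0 // => i; rewrite upd_eqE //.
by apply/negbTE; apply/negP => /and3P[a b _]; rewrite a b in hq.
Qed.

Lemma om_rhoE (R : realType) d N (k : 'I_N.+1) (p q : tidx d.+2 N) :
  omega_entry R k p q = ((p ord0 == p k) && (q ord0 == q k) && (rho k p == rho k q))%:R.
Proof.
rewrite /omega_entry; congr (_%:R); congr (_ && _).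
apply/forallP/eqP.
  move=> h; apply/ffunP=> m; rewrite !ffunE; case: ifP => // /negbT.
  by rewrite negb_or => hm; move/implyP: (h m) => /(_ hm)/eqP.
move=> h m; apply/implyP => hm; move/ffunP: h => /(_ m); rewrite !ffunE.
have -> : (m == ord0) || (m == k) = false by apply/negbTE; rewrite negb_or.
by move=> ->.
Qed.
Definition zt (d N : nat) : tidx d.+2 N := [ffun _ => ord0].
Definition kk (N : nat) (j : 'I_N) : 'I_N.+1 := lift ord0 j.
Definition fj (R : realType) (d N : nat) (j : 'I_N) (p : tidx d.+2 N) : R :=
  ((p ord0 == p (kk j)) && (rho (kk j) p == zt d N))%:R.

Lemma kk_neq0 N (j : 'I_N) : (kk j == ord0) = false.
Proof. by apply/negbTE; rewrite eq_sym neq_lift. Qed.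
Lemma kk_eq N (j k : 'I_N) : (kk j == kk k) = (j == k).
Proof. by rewrite inj_eq //; apply: lift_inj. Qed.

Lemma rho_fix d N k (r : tidx d.+2 N) m : rho k r = r -> (m == ord0) || (m == k) -> r m = ord0.
Proof. by move=> hr hm; rewrite -hr ffunE hm. Qed.

Lemma fj_upd (R : realType) d N (j k : 'I_N) (r : tidx d.+2 N) i :
  rho (kk k) r = r ->
  fj R j (upd (kk k) r i) = ((r == zt d N) && ((j == k) || (i == ord0)))%:R.
Proof.
move=> hr; rewrite /fj; congr (_%:R); congr (nat_of_bool _).
have [->|njk] := eqVneq j k.
  by rewrite upd0 updk eqxx rho_upd hr /= andbT.
rewrite orFb.
have hj : upd (kk k) r i (kk j) = r (kk j).
  by rewrite ffunE kk_neq0 kk_eq (negbTE njk).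
rewrite upd0 hj; apply/idP/idP.
  case/andP=> /eqP hi /eqP hz.
  have i0 : i = ord0.
    move/ffunP: hz => /(_ (kk k)); rewrite !ffunE kk_neq0 kk_eq eq_sym (negbTE njk) /=.
    by rewrite eqxx.
  apply/andP; split=> //; last by rewrite i0.
  apply/eqP/ffunP=> m; rewrite [RHS]ffunE.
  have [hm|hm] := boolP ((m == ord0) || (m == kk k)); first by apply: rho_fix hr hm.
  have [/eqP->|hmj] := boolP (m == kk j); first by rewrite -hi.
  move/ffunP: hz => /(_ m); rewrite !ffunE.
  move: hm; rewrite negb_or => /andP[/negbTE -> /negbTE ->].
  by rewrite (negbTE hmj).
case/andP=> /eqP -> /eqP ->; apply/andP; split.
  by rewrite ffunE.
apply/eqP/ffunP=> m; rewrite !ffunE; case: ifP => //.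
by case: ifP.
Qed.

Lemma sum_fj_upd (R : realType) d N (j k : 'I_N) (r : tidx d.+2 N) :
  rho (kk k) r = r ->
  \sum_(i : 'I_d.+2) fj R j (upd (kk k) r i) =
    (r == zt d N)%:R * (if j == k then (d.+2)%:R else 1).
Proof.
move=> hr; have [->|njk] := eqVneq j k.
  under eq_bigr => i _ do rewrite fj_upd // eqxx orTb andbT.
  by rewrite sumr_const card_ord mulr_natr.
under eq_bigr => i _ do rewrite fj_upd // (negbTE njk) orFb.
case: (r == zt d N) => /=.
  rewrite (bigD1 ord0) //= big1 ?addr0 ?mul1r // => i /negbTE -> //.
by rewrite big1 ?mul0r.
Qed.
Definition om (R : realType) (d N : nat) (k : 'I_N) (p q : tidx d.+2 N) : R :=
  omega_entry R (kk k) p q.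

Lemma Om_app (R : realType) d N (k : 'I_N) (p : tidx d.+2 N) (F : tidx d.+2 N -> R) :
  \sum_q om R k p q * F q =
  (p ord0 == p (kk k))%:R * \sum_(i : 'I_d.+2) F (upd (kk k) (rho (kk k) p) i).
Proof.
rewrite -class_sum ?rhoK // [in RHS]big_mkcond /= mulr_sumr; apply: eq_bigr => q _.
rewrite /om om_rhoE [rho _ q == _]eq_sym.
case: (p ord0 == p (kk k)); case: (q ord0 == q (kk k)); case: (rho (kk k) p == rho (kk k) q).
all: by rewrite /= ?mul1r ?mul0r.
Qed.

Lemma fjE (R : realType) d N (k : 'I_N) (p : tidx d.+2 N) :
  fj R k p = (p ord0 == p (kk k))%:R * (rho (kk k) p == zt d N)%:R.
Proof. by rewrite /fj; case: (p ord0 == _); case: (rho _ p == _); rewrite /= ?mul1r ?mul0r. Qed.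

Lemma Om_fj (R : realType) d N (j k : 'I_N) (p : tidx d.+2 N) :
  \sum_q om R k p q * fj R j q = fj R k p * (if j == k then (d.+2)%:R else 1).
Proof. by rewrite Om_app sum_fj_upd ?rhoK // mulrA -fjE. Qed.

Definition fc (R : realType) (d N : nat) (c : 'I_N -> R) (p : tidx d.+2 N) : R :=
  \sum_j c j * fj R j p.

Lemma sum_if (R : realType) d N (c : 'I_N -> R) (k : 'I_N) :
  \sum_j c j * (if j == k then (d.+2)%:R else 1) = \sum_j c j + (d.+1)%:R * c k.
Proof.
rewrite (bigD1 k) //= eqxx [in RHS](bigD1 k) //=.
under eq_bigr => j /negbTE -> do rewrite mulr1.
rewrite -!natr1; ring.
Qed.

Lemma Om_fc (R : realType) d N (c : 'I_N -> R) (k : 'I_N) (p : tidx d.+2 N) :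
  \sum_q om R k p q * fc c q = fj R k p * (\sum_j c j + (d.+1)%:R * c k).
Proof.
rewrite -sum_if mulr_sumr.
under eq_bigr => q _ do rewrite /fc mulr_sumr.
rewrite exchange_big /=; apply: eq_bigr => j _.
under eq_bigr => q _ do rewrite mulrCA.
by rewrite -mulr_sumr Om_fj mulrCA.
Qed.

Lemma sum_fj_mul (R : realType) d N (k : 'I_N) (G : tidx d.+2 N -> R) :
  \sum_p fj R k p * G p = \sum_(i : 'I_d.+2) G (upd (kk k) (zt d N) i).
Proof.
have hz : rho (kk k) (zt d N) = zt d N by apply/ffunP=> m; rewrite !ffunE; case: ifP.
rewrite -class_sum // [in RHS]big_mkcond /=; apply: eq_bigr => p _.
by rewrite fjE; case: (p ord0 == _); case: (rho _ p == _); rewrite /= ?mul1r ?mul0r.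
Qed.

Lemma ip_fj (R : realType) d N (j k : 'I_N) :
  \sum_(p : tidx d.+2 N) fj R k p * fj R j p = if j == k then (d.+2)%:R else 1.
Proof.
have hz : rho (kk k) (zt d N) = zt d N by apply/ffunP=> m; rewrite !ffunE; case: ifP.
by rewrite sum_fj_mul sum_fj_upd // eqxx mul1r.
Qed.

Lemma ip_fc (R : realType) d N (c : 'I_N -> R) (k : 'I_N) :
  \sum_(p : tidx d.+2 N) fj R k p * fc c p = \sum_j c j + (d.+1)%:R * c k.
Proof.
rewrite -sum_if; under eq_bigr => p _ do rewrite /fc mulr_sumr.
rewrite exchange_big /=; apply: eq_bigr => j _.
under eq_bigr => p _ do rewrite mulrCA.
by rewrite -mulr_sumr ip_fj.
Qed.
Lemma part_sum (R : realType) d N (k : 'I_N) (H : tidx d.+2 N -> R) :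
  \sum_(p : tidx d.+2 N) (p ord0 == p (kk k))%:R * H p =
  \sum_(r : tidx d.+2 N | rho (kk k) r == r) \sum_(i : 'I_d.+2) H (upd (kk k) r i).
Proof.
rewrite (eq_bigr (fun p : tidx d.+2 N => if p ord0 == p (kk k) then H p else 0)); last first.
  by move=> p _; case: ifP; rewrite ?mul1r ?mul0r.
rewrite -big_mkcond (partition_big (rho (kk k)) (fun r => rho (kk k) r == r)) /=; last first.
  by move=> p _; rewrite rhoK.
by apply: eq_bigr => r /eqP hr; apply: class_sum.
Qed.

Definition Qk (R : realType) (d N : nat) (f : tidx d.+2 N -> R) (k : 'I_N) : R :=
  \sum_(p : tidx d.+2 N) f p * \sum_(q : tidx d.+2 N) om R k p q * f q.

Lemma QkE (R : realType) d N (f : tidx d.+2 N -> R) (k : 'I_N) :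
  Qk f k = \sum_(r : tidx d.+2 N | rho (kk k) r == r) (\sum_(i : 'I_d.+2) f (upd (kk k) r i)) ^+ 2.
Proof.
rewrite /Qk; under eq_bigr => p _ do rewrite Om_app mulrCA.
rewrite part_sum; apply: eq_bigr => r /eqP hr.
under eq_bigr => i _ do rewrite rho_upd hr.
by rewrite -mulr_suml expr2.
Qed.

Definition wt (R : realType) (d N : nat) (c : 'I_N -> R) (p : tidx d.+2 N) : R :=
  \sum_m c m * (p ord0 == p (kk m))%:R.

Lemma wt_sum (R : realType) d N (c : 'I_N -> R) (k : 'I_N) (r : tidx d.+2 N) :
  rho (kk k) r = r ->
  \sum_(i : 'I_d.+2) wt c (upd (kk k) r i) = \sum_j c j + (d.+1)%:R * c k.
Proof.
move=> hr; rewrite -sum_if /wt exchange_big /=; apply: eq_bigr => m _.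
rewrite -mulr_sumr; congr (_ * _).
have [->|nmk] := eqVneq m k.
  under eq_bigr => i _ do rewrite upd0 updk eqxx.
  by rewrite sumr_const card_ord.
under eq_bigr => i _ do rewrite upd0 ffunE kk_neq0 kk_eq (negbTE nmk) /=.
by rewrite (bigD1 (r (kk m))) //= eqxx big1 ?addr0 // => i /negbTE ->.
Qed.

Lemma wt_ge (R : realType) d N (c : 'I_N -> R) (k : 'I_N) (p : tidx d.+2 N) :
  (forall j, 0 <= c j) -> p ord0 = p (kk k) -> c k <= wt c p.
Proof.
move=> hc hp; rewrite /wt (bigD1 k) //= hp eqxx mulr1 lerDl.
by apply: sumr_ge0 => j _; apply: mulr_ge0.
Qed.

Lemma wt_ge0 (R : realType) d N (c : 'I_N -> R) (p : tidx d.+2 N) :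
  (forall j, 0 <= c j) -> 0 <= wt c p.
Proof. by move=> hc; apply: sumr_ge0 => j _; apply: mulr_ge0. Qed.

Lemma cs_w (R : realType) (I : finType) (u w : I -> R) :
  (forall i, 0 <= w i) ->
  (\sum_i u i * w i) ^+ 2 <= (\sum_i u i ^+ 2 * w i) * (\sum_i w i).
Proof.
move=> hw.
rewrite expr2 mulr_suml [X in _ <= X]mulr_suml.
under eq_bigr => i _ do rewrite mulr_sumr.
under [X in _ <= X]eq_bigr => i _ do rewrite mulr_sumr.
set A := (X in _ <= X).
have E : \sum_i \sum_j (u i ^+ 2 * w i * w j + u j ^+ 2 * w j * w i) = A + A.
  under eq_bigr => i _ do rewrite big_split /=.
  rewrite big_split /=; congr (_ + _).
  by rewrite exchange_big.
rewrite -(ler_pM2l (ltr0Sn R 1)) mulr_sumr.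
have -> : (1 + 1) * A = A + A by rewrite mulrDl mul1r.
rewrite -E; apply: ler_sum => i _; rewrite mulr_sumr; apply: ler_sum => j _.
have := mulr_ge0 (mulr_ge0 (hw i) (hw j)) (sqr_ge0 (u i - u j)).
move: (w i) (w j) (u i) (u j) => a b x y h.
have -> : (1 + 1) * (x * a * (y * b)) = (x ^+ 2 * a * b + y ^+ 2 * b * a) - a * b * (x - y) ^+ 2.
  by ring.
by rewrite lerBlDr lerDl.
Qed.
Lemma QB (R : realType) d N (a c : 'I_N -> R) (mu : R) (f : tidx d.+2 N -> R) :
  (forall k, 0 <= a k) -> (forall k, 0 <= c k) -> 0 < \sum_j c j ->
  (forall k, a k * (\sum_j c j + (d.+1)%:R * c k) = mu * c k) ->
  \sum_k a k * Qk f k <= mu * \sum_(p : tidx d.+2 N) f p ^+ 2.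
Proof.
move=> ha hc hs he.
set s := \sum_j c j in hs he.
have mu0 : 0 <= mu.
  have : \sum_k a k * (s + (d.+1)%:R * c k) = mu * s.
    by under eq_bigr => k _ do rewrite he; rewrite -mulr_sumr.
  move=> h; rewrite -(pmulr_lge0 _ hs) -h.
  apply: sumr_ge0 => k _; apply: mulr_ge0 => //.
  by apply: addr_ge0; [exact: ltW | apply: mulr_ge0].
set g := fun p : tidx d.+2 N => f p ^+ 2 / wt c p.
have step : forall k, a k * Qk f k <=
    mu * (c k * \sum_(p : tidx d.+2 N) (p ord0 == p (kk k))%:R * g p).
  move=> k; have [ak0|akp] := eqVneq (a k) 0.
    have : mu * c k = 0 by rewrite -he ak0 mul0r.
    by rewrite ak0 mul0r mulrA => ->; rewrite mul0r.
  have ck : 0 < c k.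
    rewrite lt_def hc andbT; apply/eqP => ck0.
    move: (he k); rewrite ck0 !mulr0 addr0 => /eqP; rewrite mulf_eq0 (negbTE akp) /=.
    by move/eqP => hs0; rewrite hs0 ltxx in hs.
  rewrite mulrA -he part_sum QkE -mulrA ler_pM2l; last by rewrite lt_def akp ha.
  rewrite mulr_sumr; apply: ler_sum => r /eqP hr.
  have wpos : forall i, 0 < wt c (upd (kk k) r i).
    by move=> i; apply: (lt_le_trans ck); apply: wt_ge => //; rewrite upd0 updk.
  have := @cs_w _ _ (fun i => f (upd (kk k) r i) / wt c (upd (kk k) r i))
                (fun i => wt c (upd (kk k) r i)) (fun i => ltW (wpos i)).
  rewrite wt_sum // mulrC.
  under eq_bigr => i _ do rewrite divfK ?gt_eqF //.
  congr (_ <= _ * _); apply: eq_bigr => i _.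
  rewrite /g expr_div_n expr2 -!mulrA; congr (_ * _).
  by rewrite expr2 invfM -mulrA mulVf ?mulr1 ?gt_eqF.
apply: (le_trans (ler_sum _ (fun k _ => step k))).
rewrite -mulr_sumr ler_wpM2l //.
under eq_bigr => k _ do rewrite mulr_sumr.
rewrite exchange_big /=; apply: ler_sum => p _.
have -> : \sum_k c k * ((p ord0 == p (kk k))%:R * g p) = g p * wt c p.
  rewrite /wt mulr_sumr; apply: eq_bigr => k _; by rewrite mulrA mulrC.
rewrite /g; have [w0|wn0] := eqVneq (wt c p) 0.
  by rewrite w0 mulr0 sqr_ge0.
by rewrite divfK.
Qed.
Lemma om_sym (R : realType) d N (k : 'I_N) (p q : tidx d.+2 N) : om R k p q = om R k q p.
Proof. by rewrite /om !om_rhoE [rho _ q == _]eq_sym [(q ord0 == _) && _]andbC. Qed.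

Lemma sum_enum (R : realType) (T : finType) (G : 'I_#|T| -> R) :
  \sum_(i < #|T|) G i = \sum_(p : T) G (enum_rank p).
Proof. by rewrite (reindex enum_rank) //=; apply: onW_bij; exact: enum_rank_bij. Qed.

Lemma Smat_entry (R : realType) d N (x : 'rV[R]_N) i j :
  Smat d.+2 x i j = \sum_k `|x 0 k| * om R k (enum_val i) (enum_val j).
Proof. by rewrite /Smat summxE; apply: eq_bigr => k _; rewrite mxE mxE. Qed.

Lemma MV (R : realType) d N (x : 'rV[R]_N) (v : 'rV[R]_#|tidx d.+2 N|) j :
  (v *m Smat d.+2 x) 0 j =
  \sum_k `|x 0 k| * \sum_p om R k (enum_val j) p * v 0 (enum_rank p).
Proof.
rewrite mxE sum_enum.
under eq_bigr => p _ do rewrite Smat_entry enum_rankK mulr_sumr.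
rewrite exchange_big /=; apply: eq_bigr => k _; rewrite mulr_sumr.
by apply: eq_bigr => p _; rewrite om_sym mulrCA; congr (_ * _); exact: mulrC.
Qed.
Lemma fj_zt (R : realType) d N (j : 'I_N) : fj R j (zt d N) = 1.
Proof.
rewrite /fj !ffunE eqxx /=.
have -> : rho (kk j) (zt d N) = zt d N by apply/ffunP=> m; rewrite !ffunE; case: ifP.
by rewrite eqxx.
Qed.

Lemma sumsq_gt0 (R : realType) n (v : 'rV[R]_n) : v != 0 -> 0 < \sum_j v 0 j ^+ 2.
Proof.
move=> hv; have [j hj] : exists j, v 0 j != 0.
  apply/existsP; apply: contraR hv => /existsPn h; apply/eqP/rowP => j.
  by rewrite mxE; move: (h j); rewrite negbK => /eqP.
rewrite (bigD1 j) //=; apply: ltr_wpDr; first by apply: sumr_ge0 => i _; apply: sqr_ge0.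
by rewrite lt_def sqrf_eq0 hj sqr_ge0.
Qed.

Lemma lam_eq (R : realType) d N (x : 'rV[R]_N) (mu : R) (c : 'I_N -> R) :
  (forall k, 0 <= c k) -> 0 < \sum_j c j ->
  (forall k, `|x 0 k| * (\sum_j c j + (d.+1)%:R * c k) = mu * c k) ->
  lambda_max (Smat d.+2 x) = mu.
Proof.
move=> hc hs he.
set E := [set e : R | eigenvalue (Smat d.+2 x) e]%classic.
have muE : E mu.
  apply/eigenvalueP; exists (\row_i fc c (enum_val i)).
    apply/rowP => j; rewrite MV !mxE.
    under eq_bigr => k _ do under eq_bigr => p _ do rewrite mxE enum_rankK.
    under eq_bigr => k _ do rewrite Om_fc mulrCA he mulrCA.
    by rewrite /fc mulr_sumr; apply: eq_bigr => k _; rewrite [fj R _ _ * _]mulrC.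
  apply/eqP => /rowP /(_ (enum_rank (zt d N))); rewrite !mxE enum_rankK /fc.
  under eq_bigr => j _ do rewrite fj_zt mulr1.
  by move=> h; rewrite h ltxx in hs.
have ub : ubound E mu.
  move=> e /eigenvalueP [v hv vn0].
  set f := fun p : tidx d.+2 N => v 0 (enum_rank p).
  have key : e * \sum_j v 0 j ^+ 2 = \sum_k `|x 0 k| * Qk f k.
    transitivity (\sum_j (v *m Smat d.+2 x) 0 j * v 0 j).
      by rewrite hv mulr_sumr; apply: eq_bigr => j _; rewrite mxE -mulrA -expr2.
    rewrite sum_enum.
    under eq_bigr => q _ do rewrite MV enum_rankK mulr_suml.
    rewrite exchange_big /=; apply: eq_bigr => k _.
    rewrite /Qk mulr_sumr; apply: eq_bigr => q _.
    by rewrite -mulrA [_ * v 0 _]mulrC.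
  have := QB f (fun k => normr_ge0 (x 0 k)) hc hs he.
  rewrite -key sum_enum -/f => h.
  have hp : 0 < \sum_p f p ^+ 2 by have := sumsq_gt0 vn0; rewrite sum_enum.
  by rewrite -(ler_pM2r hp); exact: h.
apply/le_anti/andP; split.
  by apply: ge_sup => //; exists mu.
by apply: ub_le_sup => //; exists mu.
Qed.
Lemma sec_poly (R : realType) N (D : R) (a : 'I_N -> R) (m : R) :
  (forall j, 0 < m - D * a j) ->
  (\prod_j ('X - (D * a j)%:P) - \sum_j (a j)%:P * \prod_(i | i != j) ('X - (D * a i)%:P)).[m]
  = (\prod_j (m - D * a j)) * (1 - \sum_j a j / (m - D * a j)).
Proof.
move=> hb.
rewrite hornerD hornerN horner_sum horner_prod.
under eq_bigr => i _ do rewrite hornerXsubC.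
under [X in _ - X = _]eq_bigr => j _ do rewrite hornerM hornerC horner_prod.
under [X in _ - X = _]eq_bigr => j _ do under eq_bigr => i _ do rewrite hornerXsubC.
rewrite mulrBr mulr1 mulr_sumr; congr (_ - _); apply: eq_bigr => j _.
rewrite [in RHS](bigD1 j) //=.
have hb0 : m - D * a j != 0 by rewrite gt_eqF.
move: (\prod_(i | i != j) _) hb0 => P; move: (m - D * a j) => b hb0.
by field.
Qed.
Lemma cert_exists (R : realType) d N (a : 'I_N.+1 -> R) :
  (forall k, 0 <= a k) ->
  exists mu (c : 'I_N.+1 -> R), [/\ forall k, 0 <= c k, 0 < \sum_j c j &
    forall k, a k * (\sum_j c j + (d.+1)%:R * c k) = mu * c k].
Proof.
move=> ha.
have [a0|] := boolP [forall k, a k == 0].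
  exists 0, (fun _ => 1); split => //.
    by rewrite sumr_const card_ord ltr0n.
  by move=> k; move/forallP: a0 => /(_ k)/eqP ->; rewrite !mul0r.
move=> /forallPn [k0 ak0].
case: (arg_maxP a (P := predT) (i0 := ord0) isT) => j0 _ hmax.
set A := a j0.
have Apos : 0 < A.
  by apply: (lt_le_trans _ (hmax k0 isT)); rewrite lt_def ak0 ha.
set D : R := (d.+1)%:R.
have D0 : 0 <= D by apply: ler0n.
set M := \sum_j a j.
have AM : A <= M.
  by rewrite /M (bigD1 j0) //= lerDl; apply: sumr_ge0 => j _; exact: ha.
have Mpos : 0 < M by apply: lt_le_trans AM.
set lo := (D + 1) * A.
set hi := D * A + M.
have lohi : lo <= hi by rewrite /lo /hi mulrDl mul1r lerD2l.
have bpos : forall m j, lo <= m -> A <= m - D * a j.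
  move=> m j hm; rewrite lerBrDr; apply: le_trans hm.
  rewrite /lo mulrDl mul1r addrC lerD2r; apply: ler_wpM2l => //.
  exact: hmax.
set P := \prod_j ('X - (D * a j)%:P) - \sum_j (a j)%:P * \prod_(i | i != j) ('X - (D * a i)%:P).
have bpos' : forall m j, lo <= m -> 0 < m - D * a j.
  by move=> m j hm; apply: lt_le_trans Apos (bpos m j hm).
have Plo : P.[lo] <= 0.
  rewrite sec_poly; last by move=> j; apply: bpos'.
  rewrite pmulr_rle0; last by apply: prodr_gt0 => j _; apply: bpos'.
  rewrite subr_le0 (bigD1 j0) //=.
  have -> : a j0 / (lo - D * a j0) = 1.
    by rewrite -/A /lo mulrDl mul1r addrAC subrr add0r divff // gt_eqF.
  rewrite lerDl; apply: sumr_ge0 => j _; apply: divr_ge0 => //.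
  exact: ltW (bpos' _ _ (lexx _)).
have Phi : 0 <= P.[hi].
  rewrite sec_poly; last by move=> j; apply: bpos'.
  rewrite pmulr_rge0; last by apply: prodr_gt0 => j _; apply: bpos'.
  rewrite subr_ge0.
  have -> : 1 = \sum_j a j / M by rewrite -mulr_suml divff // gt_eqF.
  apply: ler_sum => j _; apply: ler_wpM2l => //.
  rewrite lef_pV2 ?posrE //; last exact: bpos'.
  rewrite /hi addrAC lerDr subr_ge0; apply: ler_wpM2l => //; exact: hmax.
have [mu /andP [hmu1 hmu2] rootP] : exists2 x, lo <= x <= hi & root P x.
  by apply: poly_ivt => //; rewrite Plo Phi.
have bmu : forall j, 0 < mu - D * a j by move=> j; apply: bpos'.
have hsec : \sum_j a j / (mu - D * a j) = 1.
  move: rootP; rewrite /root sec_poly // mulf_eq0 subr_eq0.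
  case/orP => [|/eqP //].
  by rewrite gt_eqF //; apply: prodr_gt0 => j _.
exists mu, (fun j => a j / (mu - D * a j)); split.
- by move=> k; apply: divr_ge0 => //; apply: ltW.
- by rewrite hsec ltr01.
- move=> k; rewrite hsec.
  have hb0 : mu - D * a k != 0 by rewrite gt_eqF.
  have hmu : mu = (mu - D * a k) + D * a k by rewrite subrK.
  rewrite {2}hmu; move: (mu - D * a k) hb0 => b hb0.
  by field.
Qed.
Lemma Qk_fc (R : realType) d N (c : 'I_N -> R) (k : 'I_N) :
  Qk (fc (d:=d) c) k = (\sum_j c j + (d.+1)%:R * c k) ^+ 2.
Proof.
rewrite /Qk; under eq_bigr => p _ do rewrite Om_fc mulrA [fc c p * _]mulrC.
by rewrite -mulr_suml ip_fc expr2.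
Qed.

Lemma sq_fc (R : realType) d N (c : 'I_N -> R) :
  \sum_(p : tidx d.+2 N) fc c p ^+ 2 = (\sum_j c j) ^+ 2 + (d.+1)%:R * \sum_j c j ^+ 2.
Proof.
transitivity (\sum_j c j * \sum_(p : tidx d.+2 N) fj R j p * fc c p).
  under [RHS]eq_bigr => j _ do rewrite mulr_sumr.
  rewrite [RHS]exchange_big /=; apply: eq_bigr => p _.
  by rewrite expr2 {1}/fc mulr_suml; apply: eq_bigr => j _; rewrite mulrA.
under eq_bigr => j _ do rewrite ip_fc mulrDr.
rewrite big_split /= -mulr_suml expr2; congr (_ + _).
by rewrite mulr_sumr; apply: eq_bigr => j _; rewrite mulrCA expr2.
Qed.

Lemma certx (R : realType) d N (x : 'rV[R]_N.+1) :
  exists mu (c : 'I_N.+1 -> R), [/\ forall k, 0 <= c k, 0 < \sum_j c j,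
    forall k, `|x 0 k| * (\sum_j c j + (d.+1)%:R * c k) = mu * c k &
    lambda_max (Smat d.+2 x) = mu].
Proof.
have [mu [c [h1 h2 h3]]] := cert_exists d (fun k => normr_ge0 (x 0 k)).
by exists mu, c; split => //; apply: lam_eq h1 h2 h3.
Qed.

Lemma RB (R : realType) d N (x : 'rV[R]_N.+1) (c : 'I_N.+1 -> R) :
  (forall k, 0 <= c k) ->
  \sum_k `|x 0 k| * (\sum_j c j + (d.+1)%:R * c k) ^+ 2 <=
  lambda_max (Smat d.+2 x) * ((\sum_j c j) ^+ 2 + (d.+1)%:R * \sum_j c j ^+ 2).
Proof.
move=> hc.
have [mu [c' [h1 h2 h3 ->]]] := certx d x.
have := QB (fc (d:=d) c) (fun k => normr_ge0 (x 0 k)) h1 h2 h3.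
by rewrite sq_fc; under eq_bigr => k _ do rewrite Qk_fc.
Qed.

Lemma self_id (R : realType) N (a c : 'I_N -> R) (D mu : R) :
  (forall k, a k * (\sum_j c j + D * c k) = mu * c k) ->
  \sum_k a k * (\sum_j c j + D * c k) ^+ 2 = mu * ((\sum_j c j) ^+ 2 + D * \sum_j c j ^+ 2).
Proof.
move=> he.
under eq_bigr => k _ do rewrite expr2 mulrA he -mulrA.
rewrite -mulr_sumr; congr (_ * _).
under eq_bigr => k _ do rewrite mulrDr.
rewrite big_split /= -mulr_suml expr2; congr (_ + _).
by rewrite mulr_sumr; apply: eq_bigr => j _; rewrite mulrCA expr2.
Qed.

Lemma sumsq_le (R : realType) N (c : 'I_N -> R) :
  (forall k, 0 <= c k) -> \sum_j c j ^+ 2 <= (\sum_j c j) ^+ 2.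
Proof.
move=> hc; rewrite expr2 mulr_suml; apply: ler_sum => i _.
rewrite expr2 (bigD1 i) //= mulrDr lerDl.
by apply: mulr_ge0 => //; apply: sumr_ge0.
Qed.

Lemma tk_ge (R : realType) (D s ck X : R) :
  0 <= D -> 0 <= s -> 0 <= ck -> X <= (D + 1) * s ^+ 2 ->
  2 * (D + 1) * D * s * ck <= (D + 1) * (s + D * ck) ^+ 2 - X.
Proof.
move=> hD hs hc hX.
have h1 : 0 <= (D + 1) * (D * ck) ^+ 2 by apply: mulr_ge0; [lra | apply: sqr_ge0].
have -> : (D + 1) * (s + D * ck) ^+ 2 =
   (D + 1) * s ^+ 2 + 2 * (D + 1) * D * s * ck + (D + 1) * (D * ck) ^+ 2 by ring.
lra.
Qed.
Lemma lin_comb (R : realType) n (a Q : 'I_n -> R) (K X : R) :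
  K * \sum_k a k * Q k - (\sum_k a k) * X = \sum_k a k * (K * Q k - X).
Proof.
rewrite mulr_sumr mulr_suml -sumrB; apply: eq_bigr => k _; ring.
Qed.

Theorem mainTheorem2 (R : realType) (d N : nat) :
  (2 <= d)%N -> (1 <= N)%N -> is_norm (@Qnorm R d N).
Proof.
case: d => [|[|d]] // _; case: N => [|N] // _.
set D : R := (d.+1)%:R.
have D1 : 1 <= D by rewrite /D ler1n.
have hDn : (d.+2)%:R = D + 1 :> R by rewrite /D -natr1.
have den : 0 < (d.+2)%:R ^+ 2 - 1 :> R.
  rewrite hDn; have -> : (D + 1) ^+ 2 - 1 = D * (D + 2) by ring.
  apply: mulr_gt0; lra.
set G := fun x : 'rV[R]_N.+1 => (D + 1) * lambda_max (Smat d.+2 x) - norm1 x.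
have QG : forall x, @Qnorm R d.+2 N.+1 x = G x / ((d.+2)%:R ^+ 2 - 1).
  by move=> x; rewrite /Qnorm /G hDn.
have tk : forall (c : 'I_N.+1 -> R) k, (forall k, 0 <= c k) -> 0 < \sum_j c j ->
    2 * (D + 1) * D * (\sum_j c j) * c k <=
    (D + 1) * (\sum_j c j + D * c k) ^+ 2 - ((\sum_j c j) ^+ 2 + D * \sum_j c j ^+ 2).
  move=> c k hc hs; apply: tk_ge => //; first exact: ltW.
  have := sumsq_le hc; move: (\sum_j c j ^+ 2) => S hS.
  rewrite mulrDl mul1r addrC lerD2r; apply: ler_wpM2l => //; lra.
have Gid : forall (x : 'rV[R]_N.+1) (mu : R) (c : 'I_N.+1 -> R),
    (forall k, `|x 0 k| * (\sum_j c j + D * c k) = mu * c k) ->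
    lambda_max (Smat d.+2 x) = mu ->
    G x * ((\sum_j c j) ^+ 2 + D * \sum_j c j ^+ 2) =
    \sum_k `|x 0 k| * ((D + 1) * (\sum_j c j + D * c k) ^+ 2
                       - ((\sum_j c j) ^+ 2 + D * \sum_j c j ^+ 2)).
  move=> x mu c he hl; rewrite -lin_comb (self_id he) /G hl /norm1.
  by rewrite mulrBl mulrA.
have Xpos : forall c : 'I_N.+1 -> R, (forall k, 0 <= c k) -> 0 < \sum_j c j ->
    0 < (\sum_j c j) ^+ 2 + D * \sum_j c j ^+ 2.
  move=> c hc hs; apply: (lt_le_trans (exprn_gt0 2 hs)); rewrite lerDl.
  by apply: mulr_ge0; [lra | apply: sumr_ge0 => j _; apply: sqr_ge0].
have Gge : forall x, 0 <= G x.
  move=> x; have [mu [c [hc hs he hl]]] := certx d x.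
  rewrite -(pmulr_lge0 _ (Xpos c hc hs)) (Gid x mu c he hl).
  apply: sumr_ge0 => k _; apply: mulr_ge0 => //.
  apply: le_trans (tk c k hc hs); apply: mulr_ge0 => //.
  apply: mulr_ge0; last exact: ltW.
  apply: mulr_ge0; lra.
split.
- by move=> x; rewrite QG; apply: divr_ge0 => //; exact: ltW.
- move=> x; rewrite QG => /eqP; rewrite mulf_eq0 invr_eq0 (gt_eqF den) orbF => /eqP G0.
  have [mu [c [hc hs he hl]]] := certx d x.
  have := Gid x mu c he hl; rewrite G0 mul0r => /esym /eqP.
  rewrite psumr_eq0; last first.
    move=> k _; apply: mulr_ge0 => //; apply: le_trans (tk c k hc hs).
    by apply: mulr_ge0; [apply: mulr_ge0; [apply: mulr_ge0; lra | exact: ltW] | ].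
  move=> /allP h; apply/rowP => k; rewrite mxE.
  move: (h k (mem_index_enum k)) => /eqP hk0; apply/eqP; apply/negPn/negP => xk.
  have ak : 0 < `|x 0 k| by rewrite normr_gt0.
  have ck : 0 < c k.
    rewrite lt_def hc andbT; apply/eqP => ck0.
    move: (he k); rewrite ck0 !mulr0 addr0 => /eqP; rewrite mulf_eq0 (gt_eqF ak) /=.
    by rewrite (gt_eqF hs).
  suff : 0 < `|x 0 k| * ((D + 1) * (\sum_j c j + D * c k) ^+ 2 -
       ((\sum_j c j) ^+ 2 + D * \sum_j c j ^+ 2)) by rewrite hk0 ltxx.
  apply: mulr_gt0 => //; apply: lt_le_trans (tk c k hc hs).
  apply: mulr_gt0 => //; apply: mulr_gt0 => //; apply: mulr_gt0; lra.
- move=> t x; rewrite !QG mulrA; congr (_ / _).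
  have [mu [c [hc hs he hl]]] := certx d x.
  have hl' : lambda_max (Smat d.+2 (t *: x)) = `|t| * mu.
    apply: (lam_eq (c := c)) => // k.
    by rewrite mxE normrM -mulrA he mulrA.
  rewrite /G hl hl' /norm1 mulrBr mulr_sumr; congr (_ - _); first by ring.
  by apply: eq_bigr => k _; rewrite mxE normrM.
- move=> x y; rewrite !QG -mulrDl ler_pM2r ?invr_gt0 //.
  have [mu [c [hc hs he hl]]] := certx d (x + y).
  rewrite -(ler_pM2r (Xpos c hc hs)) (Gid _ mu c he hl) mulrDl.
  set X := (\sum_j c j) ^+ 2 + D * \sum_j c j ^+ 2.
  set Q := fun k => (\sum_j c j + D * c k) ^+ 2.
  have GX : forall z : 'rV[R]_N.+1, \sum_k `|z 0 k| * ((D + 1) * Q k - X) <= G z * X.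
    move=> z; rewrite -lin_comb /G mulrBl -mulrA; apply: lerB => //.
    rewrite ler_wpM2l //; first lra.
    exact: RB.
  apply: le_trans (lerD (GX x) (GX y)).
  rewrite -big_split /=; apply: ler_sum => k _; rewrite -mulrDl.
  apply: ler_wpM2r; first by apply: le_trans (tk c k hc hs); apply: mulr_ge0;
    [apply: mulr_ge0; [apply: mulr_ge0; lra | exact: ltW] | ].
  by rewrite mxE ler_normD.
Qed.
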